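(* Let $\rho_1\in(0,1)$, $\rho_2\in(0,1-\rho_1)$. In a sample $\eta$ of $\mu^{\rho_1,\rho_2}$ there exists, with probability $1$, a site $i\in\mathbb{Z}$ with $\eta(i)=2$ (a second class particle).
   Context: $\mu^{\rho_1,\rho_2}$ (queueing construction): let $(a(i))_{i\in\mathbb{Z}}$, $(s(i))_{i\in\mathbb{Z}}$ be independent families of i.i.d. Bernoulli variables with parameters $\rho_1$ and $\rho_1+\rho_2$; $\mathcal{A}_{[i,j]}=\sum_{k=i}^ja(k)$, $\mathcal{S}_{[i,j]}=\sum_{k=i}^js(k)$ (empty sums $0$); $Q_i=\sup_{j\ge i-1}(\mathcal{A}_{[i,j]}-\mathcal{S}_{[i,j]})$; $d(i)=1$ iff $s(i)=1$ and ($a(i)=1$ or $Q_{i+1}\ge1$) (equivalently, each $i$ with $a(i)=1$ is matched to the largest $j\le i$ with $s(j)=1$ not yet matched, and $d=1$ at matched sites). Set $\eta(i)=1$ if $d(i)=1$, $\eta(i)=2$ if $s(i)=1,d(i)=0$, $\eta(i)=+\infty$ if $s(i)=0$; $\mu^{\rho_1,\rho_2}$ is the law of $\eta$. *)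

(* Defs.v *)
From HB Require Import structures.
From mathcomp Require Import all_boot all_order all_algebra.
From mathcomp Require Import all_classical all_reals.
From mathcomp Require Import ereal measure probability.
Set Implicit Arguments. Unset Strict Implicit. Unset Printing Implicit Defensive.
Import Order.TTheory GRing.Theory Num.Theory.
Local Open Scope classical_set_scope.
Local Open Scope ring_scope.

Definition mutually_independent {R : realType} {d : measure_display}
  {T : measurableType d} (P : probability T R) {I : eqType} (X : I -> T -> bool) :=
  forall (F : seq I) (v : I -> bool), uniq F ->
    P (\big[setI/setT]_(i <- F) [set w | X i w = v i])
    = (\prod_(i <- F) P [set w | X i w = v i])%E.

Definition join_family {T : Type} (a s : int -> T -> bool) : int + int -> T -> bool :=
  fun k => match k with inl i => a i | inr i => s i end.

Definition cnt {T : Type} (x : int -> T -> bool) (w : T) (i : int) (n : nat) : nat :=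
  \sum_(k < n) (x (i + (k : nat)%:Z)%R w : nat).

(* Q_{i+1} >= 1, with Q_{i+1} = sup_{j >= i} (A_[i+1,j] - S_[i+1,j]);
   j = i + n, n >= 0, so the interval [i+1, j] has length n. *)
Definition Q_ge1 {T : Type} (a s : int -> T -> bool) (w : T) (i : int) : Prop :=
  exists n : nat, (cnt a w (i + 1)%R n >= cnt s w (i + 1)%R n + 1)%N.

Definition dep {T : Type} (a s : int -> T -> bool) (w : T) (i : int) : Prop :=
  s i w /\ (a i w \/ Q_ge1 a s w i).

Inductive site := One | Two | Infty.

Definition config_eta {T : Type} (a s : int -> T -> bool) (w : T) (i : int) : site :=
  if s i w then (if pselect (dep a s w i) then One else Two) else Infty.

(* Main.v *)
Require Import Defs.
From HB Require Import structures.
From mathcomp Require Import all_boot all_order all_algebra.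
From mathcomp Require Import all_classical all_reals.
From mathcomp Require Import ereal measure probability.
From mathcomp Require Import sequences normedtype.
From mathcomp Require Import zify ring lra.
Import Order.TTheory GRing.Theory Num.Theory.
Local Open Scope classical_set_scope.
Local Open Scope ring_scope.
Section Walk.
Context {T : Type} (a s : int -> T -> bool).

Definition wlk (w : T) (b : int) (t : nat) : int :=
  (cnt a w b t)%:Z - (cnt s w b t)%:Z.

Lemma cntD (x : int -> T -> bool) w b L t :
  cnt x w b (L + t) = (cnt x w b L + cnt x w (b + L%:Z)%R t)%N.
Proof.
rewrite /cnt big_split_ord; congr addn; apply: eq_bigr => k _.
by rewrite PoszD addrA.
Qed.

Lemma cntS (x : int -> T -> bool) w b t :
  cnt x w b t.+1 = (cnt x w b t + x (b + t%:Z)%R w)%N.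
Proof. by rewrite /cnt big_ord_recr. Qed.

Lemma wlkD w b L t : wlk w b (L + t) = wlk w b L + wlk w (b + L%:Z) t.
Proof. rewrite /wlk !cntD !PoszD; ring. Qed.

Lemma wlk0 w b : wlk w b 0 = 0.
Proof. by rewrite /wlk /cnt !big_ord0. Qed.

Lemma wlkS w b t : wlk w b t.+1 = wlk w b t + (a (b + t%:Z) w)%:Z - (s (b + t%:Z) w)%:Z.
Proof. rewrite /wlk !cntS !PoszD; ring. Qed.

Lemma two_exists w b T0 : (forall t, (T0 <= t)%N -> wlk w b t <= -1) ->
  exists i, config_eta a s w i = Two.
Proof.
move=> H.
have ex : exists k, (k <= T0)%N && (0 <= wlk w b k) by exists 0%N; rewrite wlk0 lexx andbT.
have bnd : forall k, (k <= T0)%N && (0 <= wlk w b k) -> (k <= T0)%N by move=> k /andP[].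
case: (ex_maxnP ex bnd) => k /andP[kT0 wk] kmax.
have after : forall t, (k < t)%N -> wlk w b t <= -1.
  move=> t kt; case: (leqP T0 t) => tT0; first exact: H.
  have := kmax t; rewrite (ltnW tT0) /=.
  case: (lerP 0 (wlk w b t)) => //= h /(_ isT); lia.
have := after k.+1 (ltnSn k); rewrite wlkS.
case ha: (a _ w); case hs: (s _ w) => /=; try lia.
move=> _; exists (b + k%:Z).
rewrite /config_eta hs; case: pselect => //= -[_ [|[n]]]; first by rewrite ha.
have := after (k.+1 + n)%N; rewrite ltn_addr // => /(_ isT).
rewrite wlkD wlkS ha hs.
have -> : b + k.+1%:Z = b + k%:Z + 1 by rewrite -addn1 PoszD addrA.
move: wk; rewrite /wlk /=; lia.
Qed.
End Walk.

Section Real.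
Context {R : realType}.

Lemma bernoulli (y : R) n : 0 <= y -> 1 + n%:R * y <= (1 + y) ^+ n.
Proof.
move=> y0; elim: n => [|n IH]; first by rewrite mul0r addr0 expr0.
rewrite exprS -natr1; have h : 0 <= n%:R * y by apply: mulr_ge0.
nra.
Qed.

Lemma decay (x : \bar R) (C q : R) : 0 <= q < 1 ->
  (forall L : nat, (x <= (C * q ^+ L)%:E)%E) -> (x <= 0)%E.
Proof.
move=> /andP[q0 q1] hx; apply/lee_addgt0Pr => eps eps0; rewrite add0e.
case: (lerP C 0) => hC.
  apply: le_trans (hx 0%N) _; rewrite lee_fin expr0 mulr1; lra.
have [q00|qpos] := eqVneq q 0.
  apply: le_trans (hx 1%N) _; rewrite lee_fin q00 expr1 mulr0; lra.
have qp : 0 < q by rewrite lt_neqAle eq_sym qpos q0.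
set del := q^-1 - 1.
have del0 : 0 < del by rewrite /del subr_gt0 invf_gt1.
pose L := Num.bound (C / (eps * del)).
have hL : C / (eps * del) < L%:R.
  by apply: archi_boundP; apply: divr_ge0; [lra | apply: mulr_ge0; lra].
apply: le_trans (hx L) _; rewrite lee_fin.
have hb := @bernoulli del L (ltW del0).
have qe : q = (1 + del)^-1 by rewrite /del addrC subrK invrK.
rewrite qe exprVn.
have p0 : 0 < (1 + del) ^+ L by apply: exprn_gt0; lra.
rewrite -[leLHS]/(C / (1 + del) ^+ L) ler_pdivrMr //.
have : C < L%:R * (eps * del).
  by rewrite -ltr_pdivrMr //; apply: mulr_gt0.
nra.
Qed.

Lemma geom_sum (q : R) N : 0 <= q < 1 ->
  \sum_(i < N) q ^+ i <= (1 - q)^-1.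
Proof.
move=> /andP[q0 q1].
have h := subrX1 q N.
have hq : 0 < 1 - q by lra.
rewrite -[X in _ <= X]mul1r ler_pdivlMr // mulrC.
have -> : (1 - q) * \sum_(i < N) q ^+ i = 1 - q ^+ N.
  by rewrite -opprB mulNr -h opprB.
have : 0 <= q ^+ N by apply: exprn_ge0.
lra.
Qed.
End Real.

Section Prob.
Context (R : realType) (d : measure_display) (T : measurableType d)
  (P : probability T R) (rho1 rho : R) (a s : int -> T -> bool).
Hypothesis r1 : 0 <= rho1 <= 1.
Hypothesis r : 0 <= rho <= 1.
Hypothesis ma : forall i, measurable [set w | a i w].
Hypothesis ms : forall i, measurable [set w | s i w].
Hypothesis Pa : forall i, P [set w | a i w] = rho1%:E.
Hypothesis Ps : forall i, P [set w | s i w] = rho%:E.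
Hypothesis indep : mutually_independent P (join_family a s).

Local Notation I := (int + int)%type.
Local Notation X := (join_family a s).

Definition pr (j : I) (b : bool) : R :=
  match j with inl _ => if b then rho1 else 1 - rho1
             | inr _ => if b then rho else 1 - rho end.

Lemma pr_ge0 j b : 0 <= pr j b.
Proof. case: j => ? /=; case: b; move: r1 r => /andP[? ?] /andP[? ?]; lra. Qed.

Lemma mX1 j : measurable [set w | X j w].
Proof. by case: j => i /=. Qed.

Lemma setXb j b : [set w | X j w = b] = if b then [set w | X j w] else ~` [set w | X j w].
Proof.
case: b => //; apply/funext => w /=; apply/propext; rewrite /setC /=.
by case: (X j w); split.
Qed.

Lemma mX j b : measurable [set w | X j w = b].
Proof. rewrite setXb; case: b; [exact: mX1 | exact/measurableC/mX1]. Qed.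

Lemma PX j b : P [set w | X j w = b] = (pr j b)%:E.
Proof.
rewrite setXb; case: b.
  by case: j => i /=.
rewrite probability_setC; last exact: mX1.
by case: j => i /=; rewrite ?Pa ?Ps.
Qed.

Definition cyl (H : seq I) (v : I -> bool) :=
  \big[setI/setT]_(j <- H) [set w | X j w = v j].

Lemma mcyl H v : measurable (cyl H v).
Proof. by apply: bigsetI_measurable => j _; exact: mX. Qed.

Lemma Pcyl H v : uniq H -> P (cyl H v) = (\prod_(j <- H) pr j (v j))%:E.
Proof.
move=> uH; rewrite /cyl indep // -prodEFin; apply: eq_bigr => j _; exact: PX.
Qed.

Lemma cylP H v w : cyl H v w <-> (forall k, k \in H -> X k w = v k).
Proof.
elim: H => [|j H IH]; first by rewrite /cyl big_nil; split.
rewrite /cyl big_cons; split.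
  move=> [hj /IH hH] k; rewrite in_cons => /orP[/eqP->//|]; exact: hH.
move=> h; split; first by apply: h; rewrite mem_head.
by apply/IH => k kH; apply: h; rewrite in_cons kH orbT.
Qed.

Definition e (j : I) : int := match j with inl _ => 1 | inr _ => -1 end.
Definition Ev (F : seq I) (M : int) :=
  [set w | M <= \sum_(j <- F) (X j w : nat)%:Z * e j].

Lemma EvS j F M : Ev (j :: F) M =
  ([set w | X j w = true] `&` Ev F (M - e j)) `|` ([set w | X j w = false] `&` Ev F M).
Proof.
apply/funext => w; apply/propext; rewrite /Ev /= big_cons.
case: (X j w) => /=; rewrite ?mul1r ?mul0r ?add0r; split.
- by move=> h; left; split => //; lia.
- by case=> -[] // _ h; lia.
- by move=> h; right.
- by case=> -[].
Qed.

Lemma mEv F M : measurable (Ev F M).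
Proof.
elim: F M => [|j F IH] M.
  case: (lerP M 0) => h.
    suff -> : Ev [::] M = setT by [].
    by apply/funext => w; apply/propext; rewrite /Ev /= big_nil; split.
  suff -> : Ev [::] M = set0 by [].
  apply/funext => w; apply/propext; rewrite /Ev /= big_nil; split => //.
  by move=> h'; move: (lt_le_trans h h'); rewrite ltxx.
rewrite EvS; apply: measurableU; apply: measurableI; by [exact: mX | exact: IH].
Qed.

Variable th : R.
Hypothesis th1 : 1 <= th.
Definition phi (j : I) := pr j true * th ^ (e j) + pr j false.

Lemma prod_ge0 H v : 0 <= \prod_(j <- H) pr j (v j).
Proof. by apply: prodr_ge0 => j _; exact: pr_ge0. Qed.

Lemma phi_ge0 j : 0 <= phi j.
Proof.
rewrite /phi; apply: addr_ge0; last exact: pr_ge0.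
apply: mulr_ge0; first exact: pr_ge0.
by apply: exprz_ge0; apply: le_trans th1.
Qed.

Lemma key F : forall H v M, uniq (H ++ F) ->
  (P (cyl H v `&` Ev F M) <=
   ((\prod_(j <- H) pr j (v j)) * th ^ (- M) * \prod_(j <- F) phi j)%:E)%E.
Proof.
elim: F => [|j F IH] H v M uHF.
- rewrite big_nil mulr1.
  case: (lerP M 0) => hM.
  + have -> : Ev [::] M = setT.
      by apply/funext => w; apply/propext; rewrite /Ev /= big_nil; split.
    rewrite setIT Pcyl; last by rewrite cats0 in uHF.
    rewrite lee_fin ler_peMr ?prod_ge0 //.
    case: M hM => [n|n] hM.
      have -> : n = 0%N by lia.
      by rewrite oppr0 expr0z.
    by rewrite NegzE opprK; apply: exprn_ege1.
  + have -> : Ev [::] M = set0.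
      apply/funext => w; apply/propext; rewrite /Ev /= big_nil; split => //.
      by move=> h'; move: (lt_le_trans hM h'); rewrite ltxx.
    rewrite setI0 measure0 lee_fin; apply: mulr_ge0; first exact: prod_ge0.
    by apply: exprz_ge0; apply: le_trans th1.
- have jH : j \notin H.
    move: uHF; rewrite cat_uniq => /and3P[_ + _].
    by apply: contra => jH; apply/hasP; exists j => //; rewrite mem_head.
  have uHF' : uniq ((j :: H) ++ F).
    by rewrite (_ : (j :: H) ++ F = [:: j] ++ H ++ F) // uniq_catCA.
  pose v1 k := if k == j then true else v k.
  pose v0 k := if k == j then false else v k.
  have eqH : forall b, \prod_(k <- H) pr k ((fun k => if k == j then b else v k) k)
                   = \prod_(k <- H) pr k (v k).
    move=> b; rewrite big_seq_cond [RHS]big_seq_cond; apply: eq_bigr => k /andP[kH _].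
    by case: eqP => // kj; move: jH; rewrite -kj kH.
  have sub : cyl H v `&` Ev (j :: F) M `<=`
     (cyl (j :: H) v1 `&` Ev F (M - e j)) `|` (cyl (j :: H) v0 `&` Ev F M).
    move=> w [/cylP cH]; rewrite EvS => -[[xj hE]|[xj hE]]; [left|right]; split => //;
      apply/cylP => k; rewrite in_cons => /orP[/eqP ->|kH]; rewrite /v1 /v0 ?eqxx //;
      (case: eqP => [kj|_]; [by move: jH; rewrite -kj kH | exact: cH]).
  apply: le_trans; first (apply: (le_measure _ _ _ sub); rewrite inE).
  + by apply: measurableI; [exact: mcyl | exact: mEv].
  + by apply: measurableU; apply: measurableI; (exact: mcyl || exact: mEv).
  apply: le_trans; first (apply: measureU2; apply: measurableI; (exact: mcyl || exact: mEv)).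
  apply: le_trans; first (apply: leeD; apply: IH; exact: uHF').
  rewrite -EFinD lee_fin !big_cons /v1 /v0 !eqxx (eqH true) (eqH false).
  have th0 : th != 0 by apply/eqP => h; move: th1; rewrite h; lra.
  rewrite opprB addrC expfzDr // /phi.
  rewrite le_eqVlt; apply/orP; left; apply/eqP; ring.
Qed.

Definition Fw (b : int) (n : nat) : seq I :=
  [seq inl (b + k%:Z) | k <- iota 0 n] ++ [seq inr (b + k%:Z) | k <- iota 0 n].

Lemma uFw b n : uniq (Fw b n).
Proof.
rewrite cat_uniq !map_inj_uniq ?iota_uniq //=.
- by rewrite andbT; apply/hasPn => x /mapP[k _ ->]; apply/mapP => -[k' _].
- by move=> x y [] /addrI /eqP; rewrite eqz_nat => /eqP.
- by move=> x y [] /addrI /eqP; rewrite eqz_nat => /eqP.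
Qed.

Lemma cntZ (x : int -> T -> bool) w b n :
  (cnt x w b n)%:Z = \sum_(k <- iota 0 n) (x (b + k%:Z) w : nat)%:Z.
Proof.
rewrite /cnt; elim: n => [|n IH]; first by rewrite big_ord0 big_nil.
have -> : iota 0 n.+1 = iota 0 n ++ [:: n] by rewrite -addn1 iotaD.
by rewrite big_ord_recr big_cat /= big_seq1 PoszD IH.
Qed.

Lemma Ev_wlk b n M : Ev (Fw b n) M = [set w | M <= wlk a s w b n].
Proof.
apply/funext => w; apply/propext; rewrite /Ev /wlk /= !cntZ big_cat !big_map /=.
rewrite -sumrN -!big_split /=.
by under eq_bigr => k _ do rewrite mulr1 mulrN1.
Qed.

Definition phiA := rho1 * th + (1 - rho1).
Definition phiS := rho * th^-1 + (1 - rho).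

Lemma prod_Fw b n : \prod_(j <- Fw b n) phi j = (phiA * phiS) ^+ n.
Proof.
rewrite big_cat !big_map /= /phi /= expr1z exprN1 -/phiA -/phiS.
rewrite /index_iota -{1 2}(subn0 n) !prodr_const_nat subn0.
by rewrite exprMn.
Qed.

Lemma bound b n M :
  (P [set w | (M <= wlk a s w b n)%R] <= (th ^ (- M) * (phiA * phiS) ^+ n)%:E)%E.
Proof.
have := key (Fw b n) [::] (fun _ => true) M; rewrite cat0s uFw => /(_ isT).
by rewrite /cyl !big_nil setTI Ev_wlk mul1r prod_Fw.
Qed.

Lemma mW b n z : measurable [set w | (z <= wlk a s w b n)%R].
Proof. rewrite -Ev_wlk; exact: mEv. Qed.

Definition N1 := \bigcap_(M : nat) \bigcup_(n : nat) [set w | ((M%:Z) <= wlk a s w 0 n)%R].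
Definition N2 (M : nat) := \bigcap_(L : nat) [set w | (- (M%:Z) <= wlk a s w (- (L%:Z)) L)%R].

Lemma bad_sub : ~` [set w | exists i, config_eta a s w i = Two] `<=` N1 `|` \bigcup_M N2 M.
Proof.
move=> w /= hw.
case: (pselect (exists M : nat, forall n, (wlk a s w 0 n < M%:Z)%R)) => [[M hM]|hno]; [right|left].
  exists M => //; move=> L _ /=; rewrite leNgt; apply/negP => hL; apply: hw.
  apply: (@two_exists _ a s w (- L%:Z) L) => t tL.
  rewrite -(subnKC tL) wlkD addNr.
  move: (hM (t - L)%N) => h; have h2 := ltrD hL h; rewrite addNr in h2.
  move: h2; set x := (_ + _); move=> h2. lia.
move=> M _; apply: contrapT => hn; apply: hno; exists M => n.
rewrite ltNge; apply/negP => h; apply: hn; exists n => //.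
Qed.

Lemma mN1 : measurable N1.
Proof.
apply: bigcapT_measurable => M; apply: bigcupT_measurable => n; exact: mW.
Qed.

Lemma mN2 M : measurable (N2 M).
Proof. apply: bigcapT_measurable => L; exact: mW. Qed.

Hypothesis qb : 0 <= phiA * phiS < 1.
Hypothesis th_gt1 : 1 < th.

Lemma PN1 : P N1 = 0%E.
Proof.
apply/eqP; rewrite -measure_le0.
have thi : 0 <= th^-1 < 1.
  apply/andP; split; first by rewrite invr_ge0 (ltW (lt_trans ltr01 th_gt1)).
  by rewrite invf_lt1 ?(lt_trans ltr01 th_gt1).
apply: (@decay _ _ ((1 - phiA * phiS)^-1) _ thi) => M.
set q := phiA * phiS.
apply: (@le_trans _ _ (\sum_(n <oo) P [set w | ((M%:Z) <= wlk a s w 0 n)%R])%E).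
  apply: measure_sigma_subadditive; [move=> n; exact: mW | exact: mN1 |].
  by move=> w /(_ M Logic.I) [n _ h]; exists n.
apply: lime_le.
  by apply: is_cvg_nneseries => n _ _; exact: measure_ge0.
apply: nearW => N.
apply: (@le_trans _ _ (\sum_(0 <= n < N) ((th ^ (- (M%:Z)) * q ^+ n)%:E))%E).
  by apply: lee_sum => n _; exact: bound.
rewrite sumEFin lee_fin -mulr_sumr big_mkord -exprnN -exprVn mulrC.
apply: ler_wpM2r; first by apply: exprn_ge0; rewrite invr_ge0 (ltW (lt_trans ltr01 th_gt1)).
exact: geom_sum.
Qed.

Lemma PN2 M : P (N2 M) = 0%E.
Proof.
apply/eqP; rewrite -measure_le0.
apply: (@decay _ _ (th ^ (M%:Z)) _ qb) => L.
have := bound (- (L%:Z)) L (- (M%:Z)); rewrite opprK.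
apply: le_trans; apply: (le_measure P); rewrite ?inE; [exact: mN2 | exact: mW |].
by move=> w /(_ L Logic.I).
Qed.

Lemma negl : P.-negligible (~` [set w | exists i, config_eta a s w i = Two]).
Proof.
apply: (negligibleS bad_sub); apply: negligibleU.
  by apply/negligibleP; [exact: mN1 | exact: PN1].
apply: negligible_bigcup => M.
by apply/negligibleP; [exact: mN2 | exact: PN2].
Qed.
End Prob.

Theorem lemmaC1 (R : realType) (d : measure_display) (T : measurableType d)
  (P : probability T R) (rho1 rho2 : R) (a s : int -> T -> bool) :
  0 < rho1 < 1 -> 0 < rho2 < 1 - rho1 ->
  (forall i, measurable [set w | a i w]) ->
  (forall i, measurable [set w | s i w]) ->
  (forall i, P [set w | a i w] = rho1%:E) ->
  (forall i, P [set w | s i w] = (rho1 + rho2)%:E) ->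
  mutually_independent P (join_family a s) ->
  {ae P, forall w, exists i : int, config_eta a s w i = Two}.
Proof.
move=> /andP[h1 h2] /andP[h3 h4] ma ms Pa Ps ind.
have r1 : 0 <= rho1 <= 1 by apply/andP; split; lra.
have r : 0 <= rho1 + rho2 <= 1 by apply/andP; split; lra.
have th1 : 1 <= 1 + rho2 by lra.
have th_gt1 : 1 < 1 + rho2 by lra.
have qb : 0 <= @phiA _ rho1 (1 + rho2) * @phiS _ (rho1 + rho2) (1 + rho2) < 1.
  rewrite /phiA /phiS.
  have t0 : 0 < 1 + rho2 by lra.
  have -> : (rho1 + rho2) * (1 + rho2)^-1 + (1 - (rho1 + rho2))
          = (1 + rho2 - (rho1 + rho2) * rho2) / (1 + rho2).
    by field; lra.
  have hp : 0 <= 1 + rho2 - (rho1 + rho2) * rho2 by nra.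
  apply/andP; split.
    apply: mulr_ge0; first nra.
    by apply: divr_ge0; lra.
  rewrite mulrA ltr_pdivrMr // mul1r.
  have hx : rho1 * (1 - (rho1 + rho2)) < 1 by nra.
  rewrite -subr_gt0.
  have -> : (1 + rho2) - (rho1 * (1 + rho2) + (1 - rho1)) * (1 + rho2 - (rho1 + rho2) * rho2)
     = rho2 * rho2 * (1 - rho1 * (1 - (rho1 + rho2))) by ring.
  by apply: mulr_gt0; [apply: mulr_gt0 | lra].
exact: (@negl R d T P rho1 (rho1 + rho2) a s r1 r ma ms Pa Ps ind _ th1 qb th_gt1).
Qed.
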